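(* For $a,b>0$ define $f_a(t)=\mathbf 1_{\{t>0\}}\big(1-a/\sqrt t\big)^+$. Then for all $t>0$, \[ f_b*f_a'(t)\ \ge\ f_{a+b}(t), \] and in fact for $t\ge a^2+b^2$, $f_b*f_a'(t)=1-\dfrac{a\sqrt{t-b^2}+b\sqrt{t-a^2}}{t}$.
   Context: Convolution: $f_1*f_2(t)=\int_0^t f_1(s)f_2(t-s)\,ds$; $f_a'$ denotes the (a.e.) derivative of $f_a$, namely $f_a'(s)=\frac{a}{2s^{3/2}}$ for $s>a^2$ and $0$ for $s<a^2$. *)

(* Defs.v *)
From Stdlib Require Import Reals Lra.
Open Scope R_scope.

Definition fa (a t : R) : R :=
  if Rlt_dec 0 t then Rmax 0 (1 - a / sqrt t) else 0.

(* a.e. derivative of f_a: a/(2 s^{3/2}) for s > a^2, 0 otherwise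
   (the value at the single point s = a^2 is irrelevant; we take 0). *)
Definition fa' (a s : R) : R :=
  if Rlt_dec (a ^ 2) s then a / (2 * (s * sqrt s)) else 0.

Definition conv_integrand (b a t : R) : R -> R :=
  fun s => fa b s * fa' a (t - s).

(* Main.v *)
Require Import Defs.
From Stdlib Require Import Reals Lra.
From Coquelicot Require Import Coquelicot.
Open Scope R_scope.

Lemma deriv_F (a b t x: R) (ha: 0<a) (hb : 0 < b) (hx : b^2 <= x <= t - a^2):
 is_derive (fun s => a / sqrt (t - s) - (a*b/t) * (sqrt s / sqrt (t - s))) x
   ((1 - b / sqrt x) * (a / (2 * ((t - x) * sqrt (t - x))))).
Proof.
 assert (hx0 : 0 < x) by nra.
 assert (htx : 0 < t - x) by nra.
 assert (hsx : 0 < sqrt x) by (apply sqrt_lt_R0; lra).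
 assert (hstx : 0 < sqrt (t - x)) by (apply sqrt_lt_R0; lra).
 auto_derive.
 - replace (t + - x) with (t - x) by ring. repeat split; lra.
 - replace (t + - x) with (t - x) by ring.
   assert (hu := sqrt_sqrt x (Rlt_le _ _ hx0)).
   assert (hv := sqrt_sqrt (t-x) (Rlt_le _ _ htx)).
   set (u := sqrt x) in *. set (v := sqrt (t - x)) in *.
   rewrite <- hv. replace t with (u*u+v*v) by lra.
   field. repeat split; nra.
Qed.

Lemma cont_g (a b t x: R) (ha: 0<a) (hb : 0 < b) (hx : b^2 <= x <= t - a^2):
 continuous (fun s => (1 - b / sqrt s) * (a / (2 * ((t - s) * sqrt (t - s))))) x.
Proof.
 assert (hx0 : 0 < x) by nra.
 assert (htx : 0 < t - x) by nra.
 assert (hsx : 0 < sqrt x) by (apply sqrt_lt_R0; lra).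
 assert (hstx : 0 < sqrt (t - x)) by (apply sqrt_lt_R0; lra).
 apply (@ex_derive_continuous R_AbsRing R_NormedModule).
 auto_derive.
 replace (t + - x) with (t - x) by ring. assert (0 < 2 * ((t - x) * sqrt (t - x))) by (apply Rmult_lt_0_compat; [lra| apply Rmult_lt_0_compat; lra]).
 repeat split; lra.
Qed.

Lemma sqrt_sq (b : R) : 0 <= b -> sqrt (b ^ 2) = b.
Proof. intros h. rewrite <- (Rsqr_pow2). apply sqrt_Rsqr; lra. Qed.

Lemma main_is (a b t : R) (ha : 0 < a) (hb : 0 < b) (ht : a^2 + b^2 <= t) :
  is_RInt (conv_integrand b a t) 0 t
    (1 - (a * sqrt (t - b ^ 2) + b * sqrt (t - a ^ 2)) / t).
Proof.
  assert (hb2 : 0 < b^2) by nra.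
  assert (ha2 : 0 < a^2) by nra.
  set (F := fun s => a / sqrt (t - s) - (a*b/t) * (sqrt s / sqrt (t - s))).
  set (g := fun s => (1 - b / sqrt s) * (a / (2 * ((t - s) * sqrt (t - s))))).
  assert (I1 : is_RInt (conv_integrand b a t) 0 (b^2) 0).
  { apply is_RInt_ext with (fun _ => 0).
    - intros x hx. rewrite Rmin_left in hx by lra. rewrite Rmax_right in hx by lra.
      unfold conv_integrand, fa.
      destruct (Rlt_dec 0 x); [|lra].
      assert (hs : sqrt x <= b).
      { rewrite <- (sqrt_sq b) by lra. apply sqrt_le_1_alt; lra. }
      assert (hs0 : 0 < sqrt x) by (apply sqrt_lt_R0; lra).
      simpl. rewrite Rmax_left. ring.
      apply Rle_trans with (1 - 1); [|lra].
      apply Rplus_le_compat_l. apply Ropp_le_contravar.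
      apply (Rmult_le_reg_r (sqrt x)); auto. unfold Rdiv. rewrite Rmult_assoc, Rinv_l; lra.
    - pose proof (is_RInt_const 0 (b^2) 0). change (scal (b^2-0) 0) with ((b^2-0)*0) in H. rewrite Rmult_0_r in H. exact H. }
  assert (I3 : is_RInt (conv_integrand b a t) (t - a^2) t 0).
  { apply is_RInt_ext with (fun _ => 0).
    - intros x hx. rewrite Rmin_left in hx by lra. rewrite Rmax_right in hx by lra.
      unfold conv_integrand, fa'.
      destruct (Rlt_dec (a^2) (t - x)); [lra|]. simpl; ring.
    - pose proof (is_RInt_const (t - a^2) t 0). change (scal (t-(t-a^2)) 0) with ((t-(t-a^2))*0) in H. rewrite Rmult_0_r in H. exact H. }
  assert (I2 : is_RInt (conv_integrand b a t) (b^2) (t - a^2) (minus (F (t - a^2)) (F (b^2)))).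
  { apply is_RInt_ext with g.
    - intros x hx. rewrite Rmin_left in hx by lra. rewrite Rmax_right in hx by lra.
      unfold conv_integrand, fa, fa', g.
      destruct (Rlt_dec 0 x); [|lra].
      destruct (Rlt_dec (a^2) (t - x)); [|lra].
      assert (hs : b < sqrt x).
      { rewrite <- (sqrt_sq b) by lra. apply sqrt_lt_1_alt; lra. }
      assert (hs0 : 0 < sqrt x) by (apply sqrt_lt_R0; lra).
      rewrite Rmax_right. reflexivity.
      apply Rle_trans with (1 - 1); [lra|].
      apply Rplus_le_compat_l. apply Ropp_le_contravar.
      apply (Rmult_le_reg_r (sqrt x)); auto. unfold Rdiv. rewrite Rmult_assoc, Rinv_l; lra.
    - apply (@is_RInt_derive R_CompleteNormedModule).
      + intros x hx. rewrite Rmin_left in hx by lra. rewrite Rmax_right in hx by lra.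
        apply deriv_F; auto.
      + intros x hx. rewrite Rmin_left in hx by lra. rewrite Rmax_right in hx by lra.
        apply cont_g; auto. }
  pose proof (is_RInt_Chasles _ _ _ _ _ _ (is_RInt_Chasles _ _ _ _ _ _ I1 I2) I3) as H.
  replace (1 - (a * sqrt (t - b ^ 2) + b * sqrt (t - a ^ 2)) / t)
    with (plus (plus 0 (minus (F (t - a ^ 2)) (F (b ^ 2)))) 0); [exact H|].
  assert (ht0 : 0 < t) by lra.
  assert (E1 : F (t - a^2) = 1 - b * sqrt (t - a^2) / t).
  { unfold F. replace (t - (t - a^2)) with (a^2) by ring.
    rewrite sqrt_sq by lra.
    assert (htb : 0 < t - a^2) by lra.
    assert (hv := sqrt_sqrt (t - a^2) (Rlt_le _ _ htb)).
    set (v := sqrt (t - a^2)) in *. field. lra. }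
  assert (E2 : F (b^2) = a * sqrt (t - b^2) / t).
  { unfold F. rewrite sqrt_sq by lra.
    assert (htb : 0 < t - b^2) by lra.
    assert (hv := sqrt_sqrt (t - b^2) (Rlt_le _ _ htb)).
    assert (hv0 : 0 < sqrt (t - b^2)) by (apply sqrt_lt_R0; lra).
    set (v := sqrt (t - b^2)) in *.
    assert (Ht : t = v * v + b^2) by lra.
    field_simplify; [| lra | lra].
    rewrite Ht at 1. field. lra. }
  rewrite E1, E2. unfold minus, plus, opp; simpl. field. lra.
Qed.

Lemma small_is (a b t : R) (ha : 0 < a) (hb : 0 < b) (ht : 0 < t) (hs : t < a^2 + b^2) :
  is_RInt (conv_integrand b a t) 0 t 0.
Proof.
  apply is_RInt_ext with (fun _ => 0).
  - intros x hx. rewrite Rmin_left in hx by lra. rewrite Rmax_right in hx by lra.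
    unfold conv_integrand, fa, fa'. cbv beta.
    destruct (Rlt_dec 0 x); [|lra].
    destruct (Rlt_dec (a^2) (t - x)); [|simpl; ring].
    assert (hs0 : 0 < sqrt x) by (apply sqrt_lt_R0; lra).
    assert (hsx : sqrt x <= b).
    { rewrite <- (sqrt_sq b) by lra. apply sqrt_le_1_alt; lra. }
    simpl; rewrite Rmax_left. ring.
    apply Rle_trans with (1 - 1); [|lra].
    apply Rplus_le_compat_l. apply Ropp_le_contravar.
    apply (Rmult_le_reg_r (sqrt x)); auto. unfold Rdiv. rewrite Rmult_assoc, Rinv_l; lra.
  - pose proof (is_RInt_const 0 t 0). change (scal (t-0) 0) with ((t-0)*0) in H.
    rewrite Rmult_0_r in H. exact H.
Qed.

Theorem mainTheorem11 (a b t : R) (ha : 0 < a) (hb : 0 < b) (ht : 0 < t) :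
  exists pr : Riemann_integrable (conv_integrand b a t) 0 t,
    RiemannInt pr >= fa (a + b) t /\
    (a ^ 2 + b ^ 2 <= t ->
       RiemannInt pr = 1 - (a * sqrt (t - b ^ 2) + b * sqrt (t - a ^ 2)) / t).
Proof.
  destruct (Rle_lt_dec (a^2 + b^2) t) as [hl | hl].
  - pose proof (main_is a b t ha hb hl) as H.
    assert (ex : ex_RInt (conv_integrand b a t) 0 t) by (eexists; exact H).
    exists (ex_RInt_Reals_0 _ _ _ ex).
    rewrite <- RInt_Reals. rewrite (is_RInt_unique _ _ _ _ H).
    split; [|auto].
    unfold fa. destruct (Rlt_dec 0 t); [|lra].
    assert (hu := sqrt_sqrt (t - b^2) ltac:(nra)).
    assert (hv := sqrt_sqrt (t - a^2) ltac:(nra)).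
    assert (hw := sqrt_sqrt t ltac:(lra)).
    assert (hu0 := sqrt_pos (t - b^2)).
    assert (hv0 := sqrt_pos (t - a^2)).
    assert (hw0 : 0 < sqrt t) by (apply sqrt_lt_R0; lra).
    set (u := sqrt (t - b^2)) in *. set (v := sqrt (t - a^2)) in *. set (w := sqrt t) in *.
    assert (huw : u <= w) by nra.
    assert (hvw : v <= w) by nra.
    assert (K1 : a * u + b * v <= t).
    { assert (0 <= (a*b - u*v)^2) by apply pow2_ge_0.
      assert ((a*u+b*v)^2 <= t*t) by nra. nra. }
    assert (K2 : a * u + b * v <= (a + b) * w) by nra.
    apply Rle_ge. apply Rmax_lub.
    + apply Rle_trans with (1 - t / t); [right; field; lra|].
      unfold Rdiv. apply Rplus_le_compat_l, Ropp_le_contravar.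
      apply Rmult_le_compat_r; [left; apply Rinv_0_lt_compat|]; lra.
    + replace ((a + b) / w) with ((a + b) * w / t) by (rewrite <- hw; field; lra).
      unfold Rdiv. apply Rplus_le_compat_l, Ropp_le_contravar.
      apply Rmult_le_compat_r; [left; apply Rinv_0_lt_compat|]; lra.
  - pose proof (small_is a b t ha hb ht hl) as H.
    assert (ex : ex_RInt (conv_integrand b a t) 0 t) by (eexists; exact H).
    exists (ex_RInt_Reals_0 _ _ _ ex).
    rewrite <- RInt_Reals. rewrite (is_RInt_unique _ _ _ _ H).
    split; [|intros; lra].
    unfold fa. destruct (Rlt_dec 0 t); [|lra].
    assert (hw := sqrt_sqrt t ltac:(lra)).
    assert (hw0 : 0 < sqrt t) by (apply sqrt_lt_R0; lra).
    assert (hw1 : sqrt t < a + b) by nra.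
    rewrite Rmax_left. lra.
    apply Rle_trans with (1 - 1); [|lra].
    apply Rplus_le_compat_l. apply Ropp_le_contravar.
    apply (Rmult_le_reg_r (sqrt t)); auto. unfold Rdiv. rewrite Rmult_assoc, Rinv_l; lra.
Qed.
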